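(* Let $G,H$ be finite simple graphs, $x\in V(G)$, $y\in V(H)$. Then the graph $\big(S(x)*B(y)\big)\cup\big(B(x)*S(y)\big)$ (that is, the unit sphere $S_{G*H}(x,y)$) is homotopic to the join $S(x)\oplus S(y)$: the clique complexes of the two graphs are homotopy equivalent. In particular $\chi(S_{G*H}(x,y))=\chi(S(x)\oplus S(y))$.
   Context: All graphs are finite simple graphs. For a vertex $x$ of $G$, $S(x)$ is the subgraph induced on the vertices adjacent to $x$, and $B(x)$ is the subgraph induced on $V(S(x))\cup\{x\}$. The strong product $G*H$ has vertex set $V(G)\times V(H)$, two distinct vertices $(a,b),(c,d)$ being adjacent iff ($a=c$ or $a\sim c$ in $G$) and ($b=d$ or $b\sim d$ in $H$); for induced subgraphs $A\subseteq G$, $C\subseteq H$, $A*C$ is the subgraph of $G*H$ induced on $V(A)\times V(C)$, and a union of such subgraphs means the subgraph induced on the union of vertex sets. The (Zykov) join $A\oplus C$ of two graphs is their disjoint union together with all edges between a vertex of $A$ and a vertex of $C$. The clique (Whitney) complex of a graph is the simplicial complex of its vertex sets of complete subgraphs. The Euler characteristic is $\chi(G)=\sum_{k\ge0}(-1)^k f_k(G)$, where $f_k(G)$ is the number of complete subgraphs with $k+1$ vertices ($\chi$ of the empty graph is $0$). *)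

(* Defs.v *)
From mathcomp Require Import all_boot all_order all_algebra.
From mathcomp Require Import reals Rstruct.
Set Implicit Arguments. Unset Strict Implicit. Unset Printing Implicit Defensive.
Import Order.TTheory GRing.Theory Num.Theory.
Local Open Scope ring_scope.

(* A finite simple graph is a finType T with a symmetric irreflexive e : rel T.
   Induced subgraphs are represented by their vertex sets A : {set T}. *)
Definition simple_graph (T : finType) (e : rel T) : Prop :=
  symmetric e /\ irreflexive e.

Definition sphere (T : finType) (e : rel T) (x : T) : {set T} := [set y | e x y].
Definition ball (T : finType) (e : rel T) (x : T) : {set T} := x |: sphere e x.

Definition strong_rel (T1 T2 : finType) (e1 : rel T1) (e2 : rel T2) : rel (T1 * T2) :=
  fun a b => [&& a != b, (a.1 == b.1) || e1 a.1 b.1 & (a.2 == b.2) || e2 a.2 b.2].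

Definition join_rel (T1 T2 : finType) (e1 : rel T1) (e2 : rel T2) : rel (T1 + T2) :=
  fun a b => match a, b with
             | inl u, inl v => e1 u v
             | inr u, inr v => e2 u v
             | _, _ => true
             end.

Definition prod_sphere (T1 T2 : finType) (e1 : rel T1) (e2 : rel T2) (x : T1) (y : T2)
  : {set T1 * T2} :=
  setX (sphere e1 x) (ball e2 y) :|: setX (ball e1 x) (sphere e2 y).

Definition join_sphere (T1 T2 : finType) (e1 : rel T1) (e2 : rel T2) (x : T1) (y : T2)
  : {set T1 + T2} :=
  (@inl T1 T2 @: sphere e1 x) :|: (@inr T1 T2 @: sphere e2 y).

Definition clique (T : finType) (e : rel T) (A s : {set T}) : bool :=
  (s \subset A) && [forall u in s, forall v in s, (u != v) ==> e u v].

Definition fvec (T : finType) (e : rel T) (A : {set T}) (k : nat) : nat :=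
  #|[set s : {set T} | clique e A s & #|s| == k.+1]|.

(* Euler characteristic (complete subgraphs have at most #|T| vertices) *)
Definition euler_char (T : finType) (e : rel T) (A : {set T}) : int :=
  \sum_(k < #|T|) (-1) ^+ k * (fvec e A k)%:Z.

Section Realization.
Variable R : realType.

Definition supdist (V : finType) (p q : V -> R) : R :=
  \big[Num.max/0]_(v : V) `|p v - q v|.

(* geometric realization |K(A)| of the clique complex, inside R^T:
   barycentric coordinates whose support is a simplex *)
Definition realization (T : finType) (e : rel T) (A : {set T}) : (T -> R) -> Prop :=
  fun p => [/\ forall v, 0 <= p v, \sum_(v : T) p v = 1
             & clique e A [set v | p v != 0]].

Definition cont_on (V W : finType) (X : (V -> R) -> Prop) (f : (V -> R) -> (W -> R)) : Prop :=
  forall p, X p -> forall eps : R, 0 < eps -> exists2 delta : R, 0 < delta &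
    forall q, X q -> supdist p q < delta -> supdist (f p) (f q) < eps.

Definition homotopic_on (V W : finType) (X : (V -> R) -> Prop) (Y : (W -> R) -> Prop)
  (f0 f1 : (V -> R) -> (W -> R)) : Prop :=
  exists h : R -> (V -> R) -> (W -> R),
    [/\ (forall t p, 0 <= t <= 1 -> X p -> Y (h t p)),
        (forall t p, 0 <= t <= 1 -> X p -> forall eps : R, 0 < eps ->
           exists2 delta : R, 0 < delta & forall s q, 0 <= s <= 1 -> X q ->
             `|t - s| < delta -> supdist p q < delta -> supdist (h t p) (h s q) < eps),
        (forall p, X p -> h 0 p = f0 p)
      & (forall p, X p -> h 1 p = f1 p)].

Definition homotopy_equivalent (V W : finType) (X : (V -> R) -> Prop) (Y : (W -> R) -> Prop)
  : Prop :=
  exists (f : (V -> R) -> (W -> R)) (g : (W -> R) -> (V -> R)),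
    [/\ cont_on X f, (forall p, X p -> Y (f p)),
        cont_on Y g & (forall q, Y q -> X (g q))] /\
    (homotopic_on X X (fun p => g (f p)) id /\
     homotopic_on Y Y (fun q => f (g q)) id).

End Realization.

(* Main.v *)
Require Import Defs.
From mathcomp Require Import all_boot all_order all_algebra.
From mathcomp Require Import reals Rstruct.
From mathcomp Require Import zify.
From mathcomp Require Import ring lra.
Set Implicit Arguments. Unset Strict Implicit. Unset Printing Implicit Defensive.
Import Order.TTheory GRing.Theory Num.Theory.
Local Open Scope ring_scope.

Lemma euler_alt (T : finType) (e : rel T) (A : {set T}) :
  euler_char e A = \sum_(s : {set T} | clique e A s && (s != set0)) (-1) ^+ (#|s|.-1).
Proof.
rewrite /euler_char /fvec.
under eq_bigr => k _ do rewrite -[(_)%:Z]natz mulr_natr -sumr_const big_mkcond /=.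
rewrite exchange_big /= [RHS]big_mkcond /=; apply: eq_bigr => s _.
under eq_bigr => k _ do rewrite inE.
case Q: (clique e A s) => /=; last by rewrite big1.
have [->|s0] := eqP.
  by rewrite big1 // => k _; rewrite cards0.
have hs : (#|s|.-1 < #|T|)%N.
  have := max_card s; have : (0 < #|s|)%N by rewrite card_gt0; apply/eqP.
  by case: #|s|.
rewrite (bigD1 (Ordinal hs)) //= prednK ?card_gt0; last by apply/eqP.
rewrite eqxx big1 ?addr0 // => k /eqP nk.
case: eqP => // hk; exfalso; apply: nk; apply: val_inj => /=; rewrite hk.
done.
Qed.

Section Sup.
Variable R : realType.
Variable V : finType.
Implicit Types p q : V -> R.

Lemma sd_ge p q v : `|p v - q v| <= supdist p q.
Proof. by rewrite /supdist (bigD1 v) //= le_max lexx. Qed.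

Lemma sd_ge0 p q : 0 <= supdist p q.
Proof.
rewrite /supdist; elim/big_ind: _ => //.
by move=> a b ha hb; rewrite le_max ha.
Qed.

Lemma sd_lt p q (c : R) : 0 < c -> (forall v, `|p v - q v| < c) -> supdist p q < c.
Proof.
move=> c0 H; rewrite /supdist; elim/big_ind: _ => //.
by move=> a b ha hb; rewrite gt_max ha hb.
Qed.

Lemma sd_le p q (c : R) : 0 <= c -> (forall v, `|p v - q v| <= c) -> supdist p q <= c.
Proof.
move=> c0 H; rewrite /supdist; elim/big_ind: _ => //.
by move=> a b ha hb; rewrite ge_max ha hb.
Qed.

End Sup.

Lemma lip_cont (R : realType) (V W : finType) (X : (V -> R) -> Prop) (F : (V -> R) -> (W -> R)) (K : R) :
  0 <= K -> (forall p q w, `|F p w - F q w| <= K * supdist p q) -> cont_on X F.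
Proof.
move=> K0 H p Xp eps e0.
have K1 : 0 < K + 1 by lra.
exists (eps / (K + 1)); first exact: divr_gt0.
move=> q Xq hd; apply: sd_lt => // w.
have E : eps / (K + 1) * (K + 1) = eps by rewrite divfK // gt_eqF.
have h1 : K * supdist p q <= K * (eps / (K + 1)) by apply: ler_wpM2l => //; exact: ltW.
have h2 := H p q w.
have d0 : 0 < eps / (K + 1) by exact: divr_gt0.
set d := eps / (K + 1) in E h1 d0; nra.
Qed.


Lemma invol_sum0 (I : finType) (P : pred I) (w : I -> int) (h : I -> I) :
  involutive h -> (forall i, P (h i) = P i) -> (forall i, P i -> w (h i) = - w i) ->
  \sum_(i | P i) w i = 0.
Proof.
move=> hK hP hw.
have e : \sum_(i | P i) w i = - \sum_(i | P i) w i.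
  rewrite {1}(reindex_inj (inv_inj hK)) /= -sumrN.
  apply: eq_big => i; first by rewrite hP.
  by rewrite hP => /hw.
move: e; lia.
Qed.

Lemma cliqueS (T : finType) (e : rel T) (A s t : {set T}) :
  clique e A s -> t \subset s -> clique e A t.
Proof.
move=> /andP[sA /forall_inP H] ts; rewrite /clique (subset_trans ts sA) /=.
apply/forall_inP => u ut; apply/forall_inP => v vt.
have /forall_inP Hu := H u (subsetP ts u ut).
exact: Hu v (subsetP ts v vt).
Qed.

Lemma sgn_step (n : nat) : (0 < n)%N -> (-1) ^+ (n.+1.-1) = - ((-1) ^+ n.-1) :> int.
Proof. by case: n => // n _ /=; rewrite exprS mulN1r. Qed.

Definition tog (T : finType) (v : T) (s : {set T}) := if v \in s then s :\ v else v |: s.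

Lemma togK (T : finType) (v : T) : involutive (tog v).
Proof.
move=> s; rewrite /tog; case vs: (v \in s).
  by rewrite setD11 setD1K.
by rewrite setU11 setU1K // vs.
Qed.

Section Comb.
Variables (T1 T2 : finType) (e1 : rel T1) (e2 : rel T2).
Hypotheses (HG : simple_graph e1) (HH : simple_graph e2).
Variables (x : T1) (y : T2).

Let irr1 a : e1 a a = false. Proof. by case: HG => _ ->. Qed.
Let irr2 a : e2 a a = false. Proof. by case: HH => _ ->. Qed.
Let sym1 a b : e1 a b = e1 b a. Proof. by case: HG => ->. Qed.
Let sym2 a b : e2 a b = e2 b a. Proof. by case: HH => ->. Qed.

Lemma inS1 a : (a \in sphere e1 x) = e1 x a. Proof. by rewrite inE. Qed.
Lemma inS2 b : (b \in sphere e2 y) = e2 y b. Proof. by rewrite inE. Qed.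
Lemma inB1 a : (a \in ball e1 x) = (a == x) || e1 x a. Proof. by rewrite !inE. Qed.
Lemma inB2 b : (b \in ball e2 y) = (b == y) || e2 y b. Proof. by rewrite !inE. Qed.

Lemma memP (u : T1 * T2) : (u \in prod_sphere e1 e2 x y) =
  [&& (u.1 == x) || e1 x u.1, (u.2 == y) || e2 y u.2 & u != (x, y)].
Proof.
case: u => a b; rewrite /prod_sphere !inE /= xpair_eqE.
case: (a =P x) => [->|_]; case: (b =P y) => [->|_]; rewrite ?irr1 ?irr2 /=;
  by case: (e1 x a); case: (e2 y b).
Qed.

Lemma memJ (v : T1 + T2) : (v \in join_sphere e1 e2 x y) =
  match v with inl a => e1 x a | inr b => e2 y b end.
Proof.
rewrite /join_sphere inE.
case: v => c; apply/orP/idP.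
- case=> /imsetP[d dS E]; last by congruence.
  by rewrite (inl_inj E) -inS1.
- by move=> h; left; rewrite mem_imset ?inS1 //; exact: inl_inj.
- case=> /imsetP[d dS E]; first by congruence.
  by rewrite (inr_inj E) -inS2.
- by move=> h; right; rewrite mem_imset ?inS2 //; exact: inr_inj.
Qed.

Notation sr := (strong_rel e1 e2).
Notation PS := (prod_sphere e1 e2 x y).
Notation jr := (join_rel e1 e2).
Notation JS := (join_sphere e1 e2 x y).

Lemma strong_clique (A s : {set T1 * T2}) : s \subset A ->
  {in s &, forall u v, ((u.1 == v.1) || e1 u.1 v.1) && ((u.2 == v.2) || e2 u.2 v.2)} ->
  clique sr A s.
Proof.
move=> sA H; rewrite /clique sA; apply/forall_inP => u us; apply/forall_inP => v vs.
by apply/implyP => uv; rewrite /strong_rel uv /=; exact: H.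
Qed.

Lemma clique_strong (A s : {set T1 * T2}) u v : clique sr A s -> u \in s -> v \in s ->
  ((u.1 == v.1) || e1 u.1 v.1) && ((u.2 == v.2) || e2 u.2 v.2).
Proof.
move=> /andP[_ /forall_inP H] us vs.
case: (u =P v) => [->|/eqP uv]; first by rewrite !eqxx.
have /forall_inP/(_ v vs)/implyP/(_ uv)/and3P[_ h1 h2] := H u us.
by rewrite h1 h2.
Qed.

Lemma clique_sub (T : finType) (e : rel T) A s : clique e A s -> s \subset A.
Proof. by case/andP. Qed.


Definition ipred (s : {set T1 * T2}) : pred (T1 * T2) :=
  fun u => [&& u \in s, e1 x u.1 & e2 y u.2].
Definition iota s := if pick (ipred s) is Some u then tog (u.1, y) s else s.
Definition hasI s := [exists u, ipred s u].
Definition Q s := clique sr PS s && (s != set0).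
Definition QJ t := clique jr JS t && (t != set0).

Lemma ipred_tog a s : ipred (tog (a, y) s) =1 ipred s.
Proof.
move=> [a' b]; rewrite /ipred /tog /=.
case: (boolP (e2 y b)) => hb; rewrite ?andbF //.
have ne : (a', b) != (a, y).
  by rewrite xpair_eqE negb_and; apply/orP; right; apply: contraTneq hb => ->; rewrite irr2.
by case: ifP => _; rewrite ?in_setD1 ?in_setU1 ?(negbTE ne).
Qed.

Lemma iotaK : involutive iota.
Proof.
move=> s; rewrite /iota; case E: (pick (ipred s)) => [u|]; last by rewrite E.
by rewrite (eq_pick (ipred_tog u.1 s)) E togK.
Qed.

Lemma hasI_iota s : hasI (iota s) = hasI s.
Proof. by rewrite /iota; case: (pick _) => // u; exact: eq_existsb (ipred_tog _ _). Qed.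

Lemma uy_ne (u : T1 * T2) : e2 y u.2 -> u != (u.1, y).
Proof. by case: u => a b /= hb; rewrite xpair_eqE eqxx /=; apply: contraTneq hb => ->; rewrite irr2. Qed.

Lemma Q_iota s : Q s -> Q (iota s).
Proof.
rewrite /iota; case: pickP => [u /and3P[us hu1 hu2]|_] // /andP[cl _].
have uy := uy_ne hu2.
rewrite /tog /Q; case: ifP => vs.
- rewrite (cliqueS cl (subsetDl _ _)) /=.
  by apply/set0Pn; exists u; rewrite in_setD1 uy.
apply/andP; split; last by apply/set0Pn; exists (u.1, y); rewrite setU11.
apply: strong_clique.
- rewrite subUset sub1set (clique_sub cl) andbT memP /= eqxx hu1 orbT /= xpair_eqE eqxx andbT.
  by apply: contraTneq hu1 => ->; rewrite irr1.
move=> v w; rewrite !in_setU1 => /orP[/eqP->|vs'] /orP[/eqP->|ws'].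
- by rewrite !eqxx.
- have /andP[h1 _] := clique_strong cl us ws'.
  have := subsetP (clique_sub cl) w ws'; rewrite memP => /and3P[_ h2 _].
  by rewrite /= h1 /= eq_sym.
- have /andP[h1 _] := clique_strong cl vs' us.
  have := subsetP (clique_sub cl) v vs'; rewrite memP => /and3P[_ h2 _].
  by rewrite /= h1 /= sym2.
- exact: clique_strong cl vs' ws'.
Qed.

Lemma Q_iotaE s : Q (iota s) = Q s.
Proof.
apply/idP/idP => [h|]; last exact: Q_iota.
by rewrite -(iotaK s); apply: Q_iota.
Qed.

Lemma w_iota s : Q s -> hasI s ->
  (-1) ^+ (#|iota s|.-1) = - (-1) ^+ (#|s|.-1) :> int.
Proof.
move=> /andP[_ s0] /existsP[u0 hu0].
rewrite /iota; case: pickP => [u /and3P[us hu1 hu2]|H]; last by rewrite H in hu0.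
have uy := uy_ne hu2.
rewrite /tog; case: ifP => vs.
- have -> : #|s| = (#|s :\ (u.1, y)|).+1 by rewrite (cardsD1 (u.1, y)) vs.
  rewrite sgn_step ?opprK // card_gt0.
  by apply/set0Pn; exists u; rewrite in_setD1 uy.
rewrite cardsU1 vs /= add0n; move: s0; rewrite -card_gt0; case: #|s| => // n _.
by rewrite exprS mulN1r.
Qed.

Lemma shape s u : Q s -> ~~ hasI s -> u \in s ->
  (u.1 = x /\ e2 y u.2) \/ (e1 x u.1 /\ u.2 = y).
Proof.
move=> /andP[cl _] /existsPn nI us.
have := nI u; rewrite /ipred us /= => nb.
move: (subsetP (clique_sub cl) u us); rewrite memP.
case: u us nb => a b /= us nb.
case ax: (a == x) => /= /andP[h2 h3].
- left; split; first exact/eqP.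
  move: h3; rewrite (eqP ax) xpair_eqE eqxx /=.
  by case: (b =P y) h2.
- right; split => //; move: nb; rewrite h2 /=.
  move=> nb2; case/andP: h3 => /orP[/eqP//|h] _; by rewrite h in nb2.
Qed.

Definition gv (v : T1 + T2) : T1 * T2 := match v with inl a => (a, y) | inr b => (x, b) end.
Definition fv (u : T1 * T2) : T1 + T2 := if u.1 == x then inr u.2 else inl u.1.
Definition phi (t : {set T1 + T2}) := [set gv v | v in t].
Definition psi (s : {set T1 * T2}) := [set fv u | u in s].

Lemma neqx a : e1 x a -> (a == x) = false.
Proof. by move=> h; apply: contraTF h => /eqP->; rewrite irr1. Qed.
Lemma neqy b : e2 y b -> (b == y) = false.
Proof. by move=> h; apply: contraTF h => /eqP->; rewrite irr2. Qed.

Lemma phiK s : Q s && ~~ hasI s -> phi (psi s) = s.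
Proof.
case/andP => Qs nI; rewrite /phi /psi -imset_comp -[RHS]imset_id.
apply: eq_in_imset => u us /=.
case: (shape Qs nI us) => [[h1 h2]|[h1 h2]]; case: u us h1 h2 => a b /= _ h1 h2.
- by rewrite /fv /= h1 eqxx.
- by rewrite /fv /= h2 neqx.
Qed.

Lemma inJ t v : QJ t -> v \in t -> match v with inl a => e1 x a | inr b => e2 y b end.
Proof. by case/andP=> cl _ vt; rewrite -memJ (subsetP (clique_sub cl)). Qed.

Lemma gv_inj t : QJ t -> {in t &, injective gv}.
Proof.
move=> Ht v v' vt vt'; move: (inJ Ht vt) (inJ Ht vt').
case: v {vt} => c; case: v' {vt'} => c' /= h h' /eqP; rewrite xpair_eqE => /andP[/eqP E1 /eqP E2].
- by rewrite E1.
- by rewrite E1 irr1 in h.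
- by rewrite -E1 irr1 in h'.
- by rewrite E2.
Qed.

Lemma QJ_phi t : QJ t -> (Q (phi t) && ~~ hasI (phi t)) /\ psi (phi t) = t.
Proof.
move=> Ht; have /andP[cl t0] := Ht.
split; last first.
  rewrite /phi /psi -imset_comp -[RHS]imset_id; apply: eq_in_imset => v vt /=.
  move: (inJ Ht vt); case: v vt => c _ h /=; rewrite /fv /=.
  - by rewrite neqx.
  - by rewrite eqxx.
apply/andP; split; last first.
  apply/existsPn => u; rewrite /ipred; apply/negP => /and3P[/imsetP[v vt ->]].
  by case: v vt => c _ /= h1 h2; rewrite ?irr1 ?irr2 in h1 h2.
apply/andP; split; last by rewrite /phi imset_eq0.
apply: strong_clique.
- apply/subsetP => u /imsetP[v vt ->]; rewrite memP; move: (inJ Ht vt).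
  case: v vt => c _ h /=; rewrite xpair_eqE.
  + by rewrite h orbT eqxx neqx.
  + by rewrite h orbT eqxx neqy.
move=> u w /imsetP[v vt ->] /imsetP[v' vt' ->].
have H : v != v' -> join_rel e1 e2 v v'.
  by move=> ne; have /andP[_ /forall_inP/(_ v vt)/forall_inP/(_ v' vt')/implyP] := cl; apply.
move: (inJ Ht vt) (inJ Ht vt') H; case: v {vt} => c; case: v' {vt'} => c' /= h h' H.
- rewrite eqxx /=; case: (c =P c') => //= /eqP cc; rewrite andbT; apply: H.
  by apply: contra cc => /eqP E; apply/eqP; exact: inl_inj E.
- by rewrite sym1 h h' !orbT.
- by rewrite h' sym2 h !orbT.
- rewrite eqxx /=; case: (c =P c') => //= /eqP cc; apply: H.
  by apply: contra cc => /eqP E; apply/eqP; exact: inr_inj E.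
Qed.

Lemma psi_Q s : Q s && ~~ hasI s -> QJ (psi s).
Proof.
case/andP => Qs nI; have /andP[cl s0] := Qs.
apply/andP; split; last by rewrite /psi imset_eq0.
rewrite /clique; apply/andP; split.
- apply/subsetP => v /imsetP[u us ->]; rewrite memJ /fv.
  case: (shape Qs nI us) => [[h1 h2]|[h1 h2]]; first by rewrite h1 eqxx.
  by rewrite neqx.
apply/forall_inP => v /imsetP[u us ->]; apply/forall_inP => v' /imsetP[u' us' ->].
apply/implyP; have := clique_strong cl us us'.
have S1 := shape Qs nI us; have S2 := shape Qs nI us'.
case: u us S1 => a b us S1; case: u' us' S2 => a' b' us' S2.
rewrite /fv /=.
case: S1 => /= [[-> h2]|[h1 ->]]; case: S2 => /= [[-> h2']|[h1' ->]].
- rewrite eqxx /= => s2 ne.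
  case: (b =P b') ne s2 => [->|]; first by rewrite eqxx.
  by move=> _ _.
- by rewrite eqxx (neqx h1').
- by rewrite eqxx (neqx h1).
- rewrite (neqx h1) (neqx h1') eqxx /= ?andbT => s1 ne.
  case: (a =P a') ne s1 => [->|]; first by rewrite eqxx.
  by move=> _ _.
Qed.

Lemma euler_eq : euler_char sr PS = euler_char jr JS.
Proof.
rewrite !euler_alt.
have -> : \sum_(s | clique sr PS s && (s != set0)) (-1) ^+ (#|s|.-1) =
  \sum_(s | Q s) (-1) ^+ (#|s|.-1) :> int by [].
have -> : \sum_(t | clique jr JS t && (t != set0)) (-1) ^+ (#|t|.-1) =
  \sum_(t | QJ t) (-1) ^+ (#|t|.-1) :> int by [].
rewrite (bigID hasI) /=.
have -> : \sum_(s | Q s && hasI s) (-1) ^+ (#|s|.-1) = 0 :> int.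
  apply: (invol_sum0 (h := iota)); first exact: iotaK.
    by move=> s; rewrite Q_iotaE hasI_iota.
  by move=> s /andP[Qs hs]; rewrite w_iota.
rewrite add0r (reindex_onto phi psi) => [|s]; last exact: phiK.
apply: eq_big => t.
  apply/andP/idP => [[h /eqP E]|h]; first by rewrite -E; exact: psi_Q.
  by have [h1 h2] := QJ_phi h; rewrite h1 h2 eqxx.
move=> /andP[h /eqP E]; have Ht : QJ t by rewrite -E; exact: psi_Q.
by rewrite /phi card_in_imset //; exact: gv_inj.
Qed.

Variable R : realType.

Definition fmap (p : T1 * T2 -> R) : T1 + T2 -> R := fun v =>
  match v with inl a => if a == x then 0 else \sum_b p (a, b) | inr b => p (x, b) end.
Definition gmap (q : T1 + T2 -> R) : T1 * T2 -> R := fun u =>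
  (if u.2 == y then q (inl u.1) else 0) + (if u.1 == x then q (inr u.2) else 0).

Notation XP := (@realization R _ sr PS).
Notation XJ := (@realization R _ jr JS).

Lemma real_inside (T : finType) (e : rel T) A (p : T -> R) v :
  realization e A p -> p v != 0 -> v \in A.
Proof.
case=> _ _ /clique_sub /subsetP H pv; apply: H; by rewrite inE.
Qed.

Lemma real_ge0 (T : finType) (e : rel T) A (p : T -> R) v : realization e A p -> 0 <= p v.
Proof. by case. Qed.

Lemma real_le1 (T : finType) (e : rel T) A (p : T -> R) v : realization e A p -> p v <= 1.
Proof.
case=> H0 H1 _; rewrite -H1 (bigD1 v) //= lerDl; exact: sumr_ge0.
Qed.

Lemma real_clique (T : finType) (e : rel T) A (p : T -> R) u v :
  realization e A p -> p u != 0 -> p v != 0 -> u != v -> e u v.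
Proof.
case=> _ _ /andP[_ /forall_inP H] pu pv uv.
have ui : u \in [set v | p v != 0] by rewrite inE.
have vi : v \in [set v | p v != 0] by rewrite inE.
by have /forall_inP/(_ v vi)/implyP := H u ui; apply.
Qed.

Lemma sum_pair (F : T1 * T2 -> R) : \sum_u F u = \sum_a \sum_b F (a, b).
Proof. by rewrite pair_bigA; apply: eq_bigr => -[a b]. Qed.

Lemma sum_ne0 (F : T2 -> R) : \sum_b F b != 0 -> exists b, F b != 0.
Proof.
move=> H; apply/existsP; apply: contraNT H => /existsPn H.
by apply/eqP; apply: big1 => b _; apply/eqP/negPn; exact: H.
Qed.

Lemma fmap_real p : XP p -> XJ (fmap p).
Proof.
move=> Xp; have [p0 p1 _] := Xp.
split.
- case=> [a|b] /=; last exact: p0.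
  by case: ifP => // _; apply: sumr_ge0.
- rewrite big_sumType /= -p1 sum_pair [in RHS](bigD1 x) //= [in LHS](bigD1 x) //=.
  rewrite eqxx add0r addrC; congr (_ + _); apply: eq_bigr => a /negbTE ->; done.
rewrite /clique; apply/andP; split.
- apply/subsetP => v; rewrite inE memJ; case: v => [a|b] /=.
  + case: ifP => [_|ax H]; first by rewrite eqxx.
    have [b pb] := sum_ne0 H.
    have := real_inside Xp pb; rewrite memP /= ax /= => /andP[] //.
  + move=> pb; have := real_inside Xp pb; rewrite memP /= eqxx xpair_eqE eqxx /=.
    by case/andP => /orP[/eqP->|//]; rewrite eqxx.
apply/forall_inP => v; rewrite inE => fv0; apply/forall_inP => w; rewrite inE => fw0.
apply/implyP => vw.
case: v fv0 vw => [a|b]; case: w fw0 => [a'|b'] //= fw0 fv0 vw.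
- move: fv0 fw0; case: ifP => [_|_ H]; first by rewrite eqxx.
  case: ifP => [_|_ H']; first by rewrite eqxx.
  have [b pb] := sum_ne0 H; have [b' pb'] := sum_ne0 H'.
  have := clique_strong (let: And3 _ _ c := Xp in c) (u := (a, b)) (v := (a', b')).
  rewrite !inE pb pb' /= => /(_ isT isT) /andP[/orP[/eqP E|//] _].
  by rewrite E eqxx in vw.
- have := clique_strong (let: And3 _ _ c := Xp in c) (u := (x, b)) (v := (x, b')).
  rewrite !inE fv0 fw0 /= => /(_ isT isT) /andP[_ /orP[/eqP E|//]].
  by rewrite E eqxx in vw.
Qed.

Lemma gsupp q u : XJ q -> gmap q u != 0 ->
  (u.2 = y /\ q (inl u.1) != 0 /\ e1 x u.1) \/ (u.1 = x /\ q (inr u.2) != 0 /\ e2 y u.2).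
Proof.
move=> Xq; rewrite /gmap.
case: (u.2 =P y) => [E2|_]; case: (u.1 =P x) => [E1|_] /=.
- have -> : q (inl u.1) = 0.
    by apply/eqP; apply: contraT => h; have := real_inside Xq h; rewrite memJ E1 irr1.
  rewrite add0r => h; right; split => //; split => //.
  by rewrite -(memJ (inr u.2)); apply: real_inside Xq h.
- rewrite addr0 => h; left; split => //; split => //.
  by rewrite -(memJ (inl u.1)); apply: real_inside Xq h.
- rewrite add0r => h; right; split => //; split => //.
  by rewrite -(memJ (inr u.2)); apply: real_inside Xq h.
- by rewrite addr0 eqxx.
Qed.

Lemma gmap_real q : XJ q -> XP (gmap q).
Proof.
move=> Xq; have [q0 q1 _] := Xq.
split.
- by move=> u; rewrite /gmap; apply: addr_ge0; case: ifP.
- rewrite /gmap big_split /= !sum_pair -q1 big_sumType /=.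
  congr (_ + _).
  + apply: eq_bigr => a _ /=; rewrite -big_mkcond /=; exact: big_pred1_eq.
  + rewrite exchange_big; apply: eq_bigr => b _ /=; rewrite -big_mkcond /=; exact: big_pred1_eq.
apply: strong_clique.
- apply/subsetP => u; rewrite inE => /(gsupp Xq) [[E [_ h]]|[E [_ h]]];
  rewrite memP E h !orbT eqxx /=; case: u E h => a b /= -> h;
  by rewrite xpair_eqE ?eqxx ?(neqx h) ?(neqy h) ?andbT.
move=> u w; rewrite !inE => /(gsupp Xq) Hu /(gsupp Xq) Hw.
case: Hu => [[Eu [qu hu]]|[Eu [qu hu]]]; case: Hw => [[Ew [qw hw]]|[Ew [qw hw]]];
  rewrite Eu Ew ?eqxx /=.
- rewrite andbT; case: (u.1 =P w.1) => //= /eqP ne.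
  apply: (real_clique Xq qu qw); apply: contra ne => /eqP E; apply/eqP; exact: inl_inj E.
- by rewrite sym1 hu hw !orbT.
- by rewrite hw sym2 hu !orbT.
- case: (u.2 =P w.2) => //= /eqP ne.
  have ne' : inr u.2 != inr w.2 :> T1 + T2.
    by apply: contra ne => /eqP E; apply/eqP; exact: inr_inj E.
  exact: (real_clique Xq qu qw ne').
Qed.

Lemma fgK q : XJ q -> fmap (gmap q) = q.
Proof.
move=> Xq.
have qx : q (inl x) = 0.
  by apply/eqP; apply: contraT => h; have := real_inside Xq h; rewrite memJ irr1.
apply: boolp.funext => -[a|b] /=.
- case: ifP => [/eqP->|ax]; first by rewrite qx.
  rewrite /gmap /= ax.
  under eq_bigr => b _ do rewrite addr0.
  rewrite -big_mkcond /=; exact: big_pred1_eq.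
- by rewrite /gmap /= eqxx qx; case: ifP; rewrite add0r.
Qed.

Lemma hb (a b P Q t s : R) : 0 <= t <= 1 -> 0 <= s <= 1 -> 0 <= Q <= 1 -> 0 <= b <= 1 ->
  `|((1 - t) * a + t * P) - ((1 - s) * b + s * Q)| <= `|a - b| + `|P - Q| + 2 * `|t - s|.
Proof.
move=> /andP[t0 t1] /andP[s0 s1] /andP[Q0 Q1] /andP[b0 b1].
have -> : (1 - t) * a + t * P - ((1 - s) * b + s * Q) =
  (1 - t) * (a - b) + t * (P - Q) + (t - s) * (Q - b) by ring.
apply: le_trans (ler_normD _ _) _.
apply: le_trans (lerD (ler_normD _ _) (lexx _)) _.
have t0' : 0 <= 1 - t by lra.
rewrite !normrM (ger0_norm t0) (ger0_norm t0').
have : `|Q - b| <= 2 by rewrite ler_norml; apply/andP; split; lra.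
have := normr_ge0 (a - b); have := normr_ge0 (P - Q); have := normr_ge0 (t - s).
nra.
Qed.

Let K1 : R := #|T2|%:R + 1.
Lemma K1ge0 : 0 <= K1.
Proof. by rewrite /K1 addr_ge0 // ler0n. Qed.

Lemma fmap_lip p q v : `|fmap p v - fmap q v| <= K1 * supdist p q.
Proof.
have s0 := sd_ge0 p q.
case: v => [a|b] /=.
- case: ifP => _; first by rewrite subrr normr0 mulr_ge0 // K1ge0.
  rewrite -sumrB; apply: le_trans (ler_norm_sum _ _ _) _.
  apply: le_trans (_ : \sum_(b : T2) supdist p q <= _).
    by apply: ler_sum => b _; exact: sd_ge.
  rewrite sumr_const -mulr_natl /K1 mulrDl mul1r lerDl //.
- apply: le_trans (sd_ge p q (x, b)) _.
  by rewrite /K1 mulrDl mul1r lerDr mulr_ge0 // ler0n.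
Qed.

Lemma gmap_lip q q' u : `|gmap q u - gmap q' u| <= 2 * supdist q q'.
Proof.
rewrite /gmap opprD addrACA.
apply: le_trans (ler_normD _ _) _.
have s0 := sd_ge0 q q'.
have h1 : `|(if u.2 == y then q (inl u.1) else 0) - (if u.2 == y then q' (inl u.1) else 0)|
   <= supdist q q' by case: ifP => _; [exact: sd_ge | rewrite subrr normr0].
have h2 : `|(if u.1 == x then q (inr u.2) else 0) - (if u.1 == x then q' (inr u.2) else 0)|
   <= supdist q q' by case: ifP => _; [exact: sd_ge | rewrite subrr normr0].
lra.
Qed.

Lemma GG_lip p q u : `|gmap (fmap p) u - gmap (fmap q) u| <= 2 * (K1 * supdist p q).
Proof.
apply: le_trans (gmap_lip _ _ _) _; apply: ler_wpM2l => //.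
apply: sd_le; [exact: mulr_ge0 (K1ge0) (sd_ge0 _ _) | exact: fmap_lip].
Qed.

Definition Dset (p : T1 * T2 -> R) :=
  [set u | (p u != 0) || [&& u.2 == y, e1 x u.1 & fmap p (inl u.1) != 0]].

Lemma Dmem p u : u \in Dset p -> (exists b0, p (u.1, b0) != 0) /\ (u.2 = y \/ p u != 0).
Proof.
rewrite inE => /orP[h|/and3P[/eqP E _ h]].
  by split; [exists u.2; case: u h | right].
split; last by left.
move: h => /=; case: ifP => [_|_ H]; first by rewrite eqxx.
exact: sum_ne0 H.
Qed.

Lemma Dclique p : XP p -> clique sr PS (Dset p).
Proof.
move=> Xp; have [_ _ pcl] := Xp.
apply: strong_clique.
- apply/subsetP => u; rewrite inE => /orP[h|/and3P[/eqP E h _]].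
    exact: real_inside Xp h.
  by rewrite memP E h orbT eqxx /=; case: u E h => a b /= -> h; rewrite xpair_eqE neqx.
move=> u w /Dmem [[b0 pu] Hu] /Dmem [[b1 pw] Hw].
have := clique_strong pcl (u := (u.1, b0)) (v := (w.1, b1)).
rewrite !inE pu pw => /(_ isT isT) /andP[-> _] /=.
case: Hu => [Eu|puu].
  case: Hw => [Ew|pww]; first by rewrite Eu Ew eqxx.
  by have := real_inside Xp pww; rewrite memP Eu => /and3P[_ h _]; rewrite eq_sym.
case: Hw => [Ew|pww].
  by have := real_inside Xp puu; rewrite memP Ew sym2 => /and3P[].
have := clique_strong pcl (u := u) (v := w).
by rewrite !inE puu pww => /(_ isT isT) /andP[].
Qed.

Definition Hp (t : R) (p : T1 * T2 -> R) : T1 * T2 -> R :=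
  fun u => (1 - t) * gmap (fmap p) u + t * p u.

Lemma Hp_real t p : 0 <= t <= 1 -> XP p -> XP (Hp t p).
Proof.
move=> /andP[t0 t1] Xp.
have Xf := fmap_real Xp; have Xg := gmap_real Xf.
have [g0 g1 _] := Xg; have [p0 p1 _] := Xp.
split.
- by move=> u; rewrite /Hp addr_ge0 // mulr_ge0 // subr_ge0.
- by rewrite /Hp big_split /= -!mulr_sumr g1 p1 !mulr1 subrK.
apply: cliqueS (Dclique Xp) _.
apply/subsetP => u; rewrite !inE => H.
case: (boolP (p u != 0)) => //= pu.
have gu : gmap (fmap p) u != 0.
  apply: contra H => /eqP g; move/negPn/eqP: pu => pu.
  by rewrite /Hp g pu !mulr0 addr0.
case: (gsupp Xf gu) => [[E [h1 h2]]|[E [h1 h2]]].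
- by rewrite E eqxx h2 h1.
- move: h1; rewrite /= -E; case: u pu {E gu H h2} => a b /= pu h1.
  by rewrite h1 in pu.
Qed.

Lemma main_top : homotopy_equivalent XP XJ.
Proof.
exists fmap, gmap; split; [split|split].
- exact: lip_cont K1ge0 fmap_lip.
- by move=> p; exact: fmap_real.
- by apply: (lip_cont (K := 2)) => //; exact: gmap_lip.
- by move=> q; exact: gmap_real.
- exists Hp; split.
  + by move=> t p ht Xp; exact: Hp_real.
  + move=> t p ht Xp eps e0.
    have K0 := K1ge0.
    have M0 : 0 < 2 * K1 + 3 by lra.
    have d0 : 0 < eps / (2 * K1 + 3) by exact: divr_gt0.
    have E : eps / (2 * K1 + 3) * (2 * K1 + 3) = eps by rewrite divfK // gt_eqF.
    exists (eps / (2 * K1 + 3)) => // s q hs Xq hts hd.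
    apply: sd_lt => // u.
    have Xg := gmap_real (fmap_real Xq).
    have hb' := hb (gmap (fmap p) u) (p u) ht hs
       (introT andP (conj (real_ge0 u Xq) (real_le1 u Xq)))
       (introT andP (conj (real_ge0 u Xg) (real_le1 u Xg))).
    apply: le_lt_trans hb' _.
    have h1 := GG_lip p q u.
    have h2 := sd_ge p q u.
    have h3 : K1 * supdist p q <= K1 * (eps / (2 * K1 + 3)) by apply: ler_wpM2l => //; exact: ltW.
    set d := eps / (2 * K1 + 3) in d0 E hd hts h3.
    nra.
  + by move=> p Xp; apply: boolp.funext => u; rewrite /Hp subr0 mul1r mul0r addr0.
  + by move=> p Xp; apply: boolp.funext => u; rewrite /Hp subrr mul0r add0r mul1r.
- exists (fun _ q => q); split.
  + by [].
  + move=> t q _ _ eps e0; exists eps => // s q' _ _ _ //.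
  + by move=> q Xq; rewrite fgK.
  + by [].
Qed.

End Comb.

From Stdlib Require Import Rdefinitions.
Local Open Scope ring_scope.

Theorem mainTheorem3 (T1 T2 : finType) (e1 : rel T1) (e2 : rel T2)
  (HG : simple_graph e1) (HH : simple_graph e2) (x : T1) (y : T2) :
  homotopy_equivalent
    (@realization R _ (strong_rel e1 e2) (prod_sphere e1 e2 x y))
    (@realization R _ (join_rel e1 e2) (join_sphere e1 e2 x y))
  /\ euler_char (strong_rel e1 e2) (prod_sphere e1 e2 x y)
     = euler_char (join_rel e1 e2) (join_sphere e1 e2 x y).
Proof.
split; [exact: main_top | exact: euler_eq].
Qed.
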